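(* Let $(S^d,T^d)_{d\in\{1,\dots,D\}}$ be period counters for $N$ workers and $D$ days. Then $T^1=0$ and for all $1\le d\le D-1$: $S^d\le S^{d+1}$, $\;T^d\le T^{d+1}$, $\;T^{d+1}\le S^d$, and $\;S^{d+1}\le T^d+N$.
   Context: A schedule for $N$ workers on $D$ days is any map $f:\{n_1,\dots,n_N\}\times\{1,\dots,D\}\to\{\mathrm{ON},\mathrm{OFF}\}$. A work period of a worker is an inclusion-wise maximal set of consecutive days on which the worker is ON. Integers $(S^d,T^d)_{d\in\{1,\dots,D\}}$ are called period counters if there exists some schedule for $N$ workers on $D$ days such that for each $d$, $S^d$ is the number of work periods (over all workers) whose first day is among days $1,\dots,d$, and $T^d$ is the number of work periods whose last day is among days $1,\dots,d-1$; the counters are then said to represent that schedule. *)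

(* Defs.v *)
From mathcomp Require Import all_boot.
Set Implicit Arguments. Unset Strict Implicit. Unset Printing Implicit Defensive.

(* A schedule for N workers on D days: worker i is ON on day d iff f i d,
   where days are 1..D; values of f outside 1..D are irrelevant. *)
Definition schedule (N : nat) := 'I_N -> nat -> bool.

Definition starts_on (N D : nat) (f : schedule N) (i : 'I_N) (d : nat) : bool :=
  [&& 1 <= d, d <= D, f i d & (d == 1) || ~~ f i d.-1].

Definition ends_on (N D : nat) (f : schedule N) (i : 'I_N) (d : nat) : bool :=
  [&& 1 <= d, d <= D, f i d & (d == D) || ~~ f i d.+1].

Definition S_count (N D : nat) (f : schedule N) (d : nat) : nat :=
  \sum_(i < N) \sum_(1 <= e < d.+1) starts_on D f i e.

Definition T_count (N D : nat) (f : schedule N) (d : nat) : nat :=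
  \sum_(i < N) \sum_(1 <= e < d) ends_on D f i e.

Definition period_counters (N D : nat) (S T : nat -> nat) : Prop :=
  exists f : schedule N,
    forall d, 1 <= d <= D -> S d = S_count D f d /\ T d = T_count D f d.

(* Main.v *)
Require Import Defs.
From mathcomp Require Import all_boot.
From mathcomp Require Import zify.

Section W.
Variables (N D : nat) (f : schedule N) (i : 'I_N).
Let s d := \sum_(1 <= e < d.+1) (starts_on D f i e : nat).
Let t d := \sum_(1 <= e < d) (ends_on D f i e : nat).

Lemma inv d : d < D -> s d = t d.+1 + ((0 < d) && f i d && f i d.+1).
Proof.
rewrite /s /t; elim: d => [|d IH] Hd; first by rewrite !big_geq.
rewrite !(big_nat_recr d.+1) // IH ?(ltnW Hd) //.
rewrite /starts_on /ends_on /= (ltnW Hd) /=.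
have -> : (d.+1 == D) = false by apply/negbTE; rewrite neq_ltn Hd.
rewrite -!addnA; congr (_ + _).
move: (f i d) (f i d.+1) (f i d.+2) => a b c.
by case: d {IH Hd} => [|d]; case: a; case: b; case: c.
Qed.

Lemma four d : 1 <= d -> d < D ->
  [/\ s d <= s d.+1, t d <= t d.+1, t d.+1 <= s d & s d.+1 <= t d + 1].
Proof.
move=> H1 HD.
have Hs : s d.+1 = s d + starts_on D f i d.+1 by rewrite /s big_nat_recr.
have Ht : t d.+1 = t d + ends_on D f i d by rewrite /t big_nat_recr.
have Hi := inv d HD.
split.
- by rewrite Hs leq_addr.
- by rewrite Ht leq_addr.
- by rewrite Hi leq_addr.
rewrite Hs Hi Ht /starts_on /ends_on H1 (ltnW HD) HD /=.
have -> : (d == D) = false by apply/negbTE; rewrite neq_ltn HD.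
case: d H1 HD {Hs Ht Hi} => [|d] H1 HD //=.
case: (f i _); case: (f i _); rewrite /= ?addn0; lia.
Qed.
End W.

Theorem lemma5p4 (N D : nat) (S T : nat -> nat) :
  1 <= D ->
  period_counters N D S T ->
  T 1 = 0 /\
  (forall d, 1 <= d <= D.-1 ->
     [/\ S d <= S d.+1, T d <= T d.+1, T d.+1 <= S d & S d.+1 <= T d + N]).
Proof.
move=> HD [f Hf]; split.
  have [_ ->] := Hf 1 (ltac:(by rewrite HD)).
  by rewrite /T_count big1 // => j _; rewrite big_geq.
move=> d /andP [H1 H2].
have HdD : d < D by move: H2 HD; case: (D) => // D0 /=.
have [-> ->] := Hf d (ltac:(by rewrite H1 (ltnW HdD))).
have [-> ->] := Hf d.+1 (ltac:(by rewrite HdD)).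
rewrite /S_count /T_count; split.
- by apply: leq_sum => j _; case: (@four N D f j d H1 HdD).
- by apply: leq_sum => j _; case: (@four N D f j d H1 HdD).
- by apply: leq_sum => j _; case: (@four N D f j d H1 HdD).
- apply: (@leq_trans (\sum_(j < N) ((\sum_(1 <= e < d) (ends_on D f j e : nat)) + 1))).
    by apply: leq_sum => j _; case: (@four N D f j d H1 HdD).
  by rewrite big_split /= sum1_card card_ord.
Qed.
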